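(* Fix $n\ge1$, $p\in(0,1]$. Let $ALG$ be any $\gamma$-robust policy for the SP-UA. Then for every $U:[n]\to\mathbb R_+$ with $U_1\ge U_2\ge\cdots\ge U_n\ge0$, $\mathbb E[U(ALG)]\ge\gamma\,\mathbb E[U(OPT)]$. Moreover, \[ \gamma_n^*=\max_{ALG}\ \min\Big\{\frac{\mathbb E[U(ALG)]}{\mathbb E[U(OPT)]}:\ U:[n]\to\mathbb R_+,\ U\neq0,\ U_1\ge\cdots\ge U_n\ge0\Big\}, \] where the maximum is over policies for the SP-UA.
   Context: SP-UA model: fix $n\ge1$, $p\in(0,1]$; $n$ candidates with distinct overall ranks $1,\dots,n$ ($1$ best) arrive in uniformly random order; the decision maker sees only partial ranks (the rank of the current candidate among those arrived so far) and irrevocably decides (possibly randomly) to make an offer or pass; each candidate is independently willing to accept an offer with probability $p$, and the process stops when an offer is accepted. A policy collects a candidate of rank $i$ if it makes her an offer and she accepts. Robust ratio $\gamma_{\mathcal P}=\min_{k\in[n]}\Pr(\mathcal P\text{ collects a candidate with rank}\le k)/(1-(1-p)^k)$; $\gamma_n^*=\sup_{\mathcal P}\gamma_{\mathcal P}$; $\mathcal P$ is $\gamma$-robust if $\gamma\le\gamma_{\mathcal P}$. Given a utility $U$, $U(ALG)$ is $U_i$ if $ALG$ collects a candidate of overall rank $i$ and $0$ if it collects no one; $U(OPT)=U_{i^*}$ where $i^*$ is the best overall rank among candidates willing to accept (and $0$ if none is willing), so $\mathbb E[U(OPT)]=\sum_{i=1}^nU_ip(1-p)^{i-1}$. *)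

(* Defs.v *)
From HB Require Import structures.
From mathcomp Require Import all_boot all_order all_algebra all_fingroup.
From mathcomp Require Import all_classical all_reals.
Set Implicit Arguments. Unset Strict Implicit. Unset Printing Implicit Defensive.
Import Order.TTheory GRing.Theory Num.Theory.
Local Open Scope classical_set_scope.
Local Open Scope ring_scope.

Section SPUA.
Variable R : realType.

(* A (behavioral, possibly randomized) policy: given the partial ranks
   r_1..r_t observed so far (r_t = partial rank of the current candidate)
   and its own past decisions d_1..d_{t-1} (true = offer made; every past
   offer was necessarily rejected, otherwise the process has stopped),
   it makes an offer with probability  q r d. *)
Definition policy := seq nat -> seq bool -> R.
Definition is_policy (q : policy) := forall r d, 0 <= q r d <= 1.

(* Arrival order: sigma t (0-based) is the overall rank minus 1 of the
   candidate arriving at time t (0-based). *)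
Definition ranks_seq n (s : {perm 'I_n}) : seq nat := [seq val (s i) | i <- enum 'I_n].

(* partial rank (1-based) of the candidate arriving at time u *)
Definition prank (rs : seq nat) (u : nat) : nat :=
  count (fun x => (x <= nth 0%N rs u)%N) (take u.+1 rs).
Definition pranks (rs : seq nat) (t : nat) : seq nat := [seq prank rs u | u <- iota 0 t.+1].

(* probability that the process reaches time size d with decision history d
   (all offers rejected) *)
Definition reach (q : policy) (p : R) (rs : seq nat) (d : seq bool) : R :=
  \prod_(u < size d)
    (let x := q (pranks rs u) (take u d) in
     if nth false d u then x * (1 - p) else 1 - x).

Definition collect_at (q : policy) (p : R) (rs : seq nat) (t : nat) : R :=
  \sum_(d : t.-tuple bool) reach q p rs d * q (pranks rs t) d * p.

(* E[U(ALG)], U i = utility of overall rank i (1-based) *)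
Definition expU n (p : R) (q : policy) (U : nat -> R) : R :=
  (n`!%:R)^-1 * \sum_(s : {perm 'I_n}) \sum_(t < n)
     U (val (s t)).+1 * collect_at q p (ranks_seq s) t.

Definition Pcollect_le n (p : R) (q : policy) (k : nat) : R :=
  expU n p q (fun i => if (i <= k)%N then 1 else 0).

Definition expOPT n (p : R) (U : nat -> R) : R :=
  \sum_(1 <= i < n.+1) U i * p * (1 - p) ^+ (i - 1).

Definition robust_ratio n (p : R) (q : policy) : R :=
  inf [set Pcollect_le n p q k / (1 - (1 - p) ^+ k) | k in [set k : nat | (1 <= k <= n)%N]].

Definition is_robust n (p : R) (g : R) (q : policy) := g <= robust_ratio n p q.

Definition gamma_star n (p : R) : R :=
  sup [set robust_ratio n p q | q in [set q | is_policy q]].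

(* U : [n] -> R_+ with U_1 >= ... >= U_n >= 0 (values outside [n] irrelevant) *)
Definition admissible_utility n (U : nat -> R) :=
  (forall i, (1 <= i <= n)%N -> 0 <= U i) /\
  (forall i, (1 <= i < n)%N -> U i.+1 <= U i) /\ 0 <= U n.

Definition nonzero_utility n (U : nat -> R) := exists i, (1 <= i <= n)%N /\ U i <> 0.

Definition worst_ratio n (p : R) (q : policy) : R :=
  inf [set expU n p q U / expOPT n p U |
        U in [set U | admissible_utility n U /\ nonzero_utility n U]].

End SPUA.

(* Main.v *)
Require Import Defs.
From HB Require Import structures.
From mathcomp Require Import all_boot all_order all_algebra all_fingroup.
From mathcomp Require Import all_classical all_reals all_analysis.
From mathcomp Require Import lra.
Import Order.TTheory GRing.Theory Num.Theory numFieldTopology.Exports numFieldNormedType.Exports.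
Local Open Scope ring_scope.

Section Aux.
Variable R : realType.
Variable n : nat.
Variable p : R.

Definition step (k : nat) : nat -> R := fun i => if (i <= k)%N then 1 else 0.
Definition Ucut (U : nat -> R) (i : nat) : R := if (i <= n)%N then U i else 0.
Definition Dd (U : nat -> R) (k : nat) : R := Ucut U k - Ucut U k.+1.

Lemma decomp U i : (1 <= i <= n)%N ->
  U i = \sum_(1 <= k < n.+1) Dd U k * step k i.
Proof.
case/andP=> i1 iN.
rewrite (@big_cat_nat _ _ _ i) //=; last by apply: leqW.
rewrite big1_seq ?add0r; last first.
  move=> k /andP[_]; rewrite mem_index_iota => /andP[_ ki].
  by rewrite /step leqNgt ki mulr0.
rewrite (@telescope_sumr_eq _ _ _ (fun k => - Ucut U k)); last 2 first.
- by apply: leqW.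
- move=> k /andP[ik _]; rewrite /step ik mulr1 /Dd; lra.
by rewrite /Ucut ltnn iN; lra.
Qed.

Lemma expU_decomp q U :
  expU n p q U = \sum_(1 <= k < n.+1) Dd U k * Pcollect_le n p q k.
Proof.
rewrite /Pcollect_le /expU; set c := (n`!%:R)^-1.
rewrite [RHS](eq_bigr (fun k => c * (Dd U k * \sum_(s : {perm 'I_n}) \sum_(t < n)
   step k (val (s t)).+1 * collect_at q p (ranks_seq s) t))); last by move=> k _; rewrite mulrCA.
rewrite -big_distrr /=; congr (_ * _).
under [in RHS]eq_bigr => k _ do rewrite big_distrr /=.
rewrite [RHS]exchange_big /=; apply: eq_bigr => s _.
under [in RHS]eq_bigr => k _ do rewrite big_distrr /=.
rewrite [RHS]exchange_big /=; apply: eq_bigr => t _.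
rewrite (@decomp U (val (s t)).+1); last by rewrite /= ltn_ord.
rewrite big_distrl /=; apply: eq_bigr => k _.
by rewrite /step -mulrA.
Qed.

Lemma expOPT_decomp U :
  expOPT n p U = \sum_(1 <= k < n.+1) Dd U k * expOPT n p (step k).
Proof.
rewrite /expOPT.
under [in RHS]eq_bigr => k _ do rewrite big_distrr /=.
rewrite exchange_big /=; apply: eq_big_nat => i ii.
rewrite (@decomp U i ii) !big_distrl /=; apply: eq_bigr => k _.
by rewrite !mulrA.
Qed.


Lemma geom k : \sum_(1 <= i < k.+1) p * (1 - p) ^+ (i - 1) = 1 - (1 - p) ^+ k.
Proof.
elim: k => [|k IH]; first by rewrite big_geq // expr0 subrr.
rewrite big_nat_recr //= IH subSS subn0 exprS; lra.
Qed.

Lemma expOPT_step k : (k <= n)%N -> expOPT n p (step k) = 1 - (1 - p) ^+ k.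
Proof.
move=> kn; rewrite /expOPT -geom.
rewrite (@big_cat_nat _ _ _ k.+1) //=.
rewrite [X in _ + X]big1_seq ?addr0; last first.
  move=> i /andP[_]; rewrite mem_index_iota => /andP[ki _].
  by rewrite /step leqNgt ki !mul0r.
apply: eq_big_nat => i /andP[_ ik]; rewrite /step -ltnS ik mul1r //.
Qed.

Lemma ck_gt0 k : 0 < p <= 1 -> (1 <= k)%N -> 0 < 1 - (1 - p) ^+ k.
Proof.
case/andP=> p0 p1 k1; rewrite subr_gt0 expr_lt1 //; lra.
Qed.

Lemma Dd_ge0 U k : admissible_utility n U -> (1 <= k <= n)%N -> 0 <= Dd U k.
Proof.
case=> _ [Hm Hn] /andP[k1 kn]; rewrite /Dd /Ucut kn.
have [kn'|kn'] := ltnP k n.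
  by rewrite subr_ge0 Hm // k1.
have -> : k = n by apply/eqP; rewrite eqn_leq kn kn'.
by rewrite subr0.
Qed.

Lemma argmin (f : nat -> R) m : (1 <= m)%N ->
  exists2 k0, (1 <= k0 <= m)%N & forall k, (1 <= k <= m)%N -> f k0 <= f k.
Proof.
elim: m => // -[|m] IH _.
  by exists 1%N => // k /andP[k1 k2]; have -> : k = 1%N by apply/eqP; rewrite eqn_leq k1 k2.
have [k0 /andP[k01 k0m] Hk0] := IH isT.
have [le|lt] := lerP (f k0) (f m.+2).
  exists k0; first by rewrite k01 (leq_trans k0m).
  move=> k /andP[k1]; rewrite leq_eqVlt => /orP[/eqP->//|]; rewrite ltnS => km.
  by apply: Hk0; rewrite k1.
exists m.+2; first by rewrite leqnn.
move=> k /andP[k1]; rewrite leq_eqVlt => /orP[/eqP->//|]; rewrite ltnS => km.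
by apply: le_trans (ltW lt) (Hk0 _ _); rewrite k1.
Qed.

Lemma inf_attained (E : set R) e : E e -> lbound E e -> inf E = e.
Proof.
move=> Ee lb; apply/le_anti/andP; split.
  by apply: ge_inf => //; exists e.
by apply: lb_le_inf => //; exists e.
Qed.

Lemma sup_attained (E : set R) e : E e -> ubound E e -> sup E = e.
Proof.
move=> Ee ub; apply/le_anti/andP; split.
  by apply: ge_sup => //; exists e.
by apply: ub_le_sup => //; exists e.
Qed.

Lemma fin_inf (f : nat -> R) m : (1 <= m)%N ->
  exists2 k0, (1 <= k0 <= m)%N &
   inf [set f k | k in [set k : nat | (1 <= k <= m)%N]] = f k0 /\
   forall k, (1 <= k <= m)%N -> f k0 <= f k.
Proof.
move=> m1; have [k0 k0m Hk0] := @argmin f m m1.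
exists k0 => //; split => //.
apply: inf_attained; first by exists k0.
by move=> _ [k km <-]; apply: Hk0.
Qed.

Definition ratio q k := Pcollect_le n p q k / (1 - (1 - p) ^+ k).

Lemma robust_le q k : (1 <= k <= n)%N -> robust_ratio n p q <= ratio q k.
Proof.
move=> kn; have n1 : (1 <= n)%N by case/andP: kn => a b; apply: leq_trans a b.
have [k0 _ [E H]] := @fin_inf (ratio q) n n1.
by rewrite /robust_ratio -/(ratio q) E; apply: H.
Qed.

Lemma part1 q g U : 0 < p <= 1 -> is_robust n p g q -> admissible_utility n U ->
  g * expOPT n p U <= expU n p q U.
Proof.
move=> pp rob adm.
rewrite expOPT_decomp expU_decomp mulr_sumr; apply: ler_sum_nat => k kn.
rewrite expOPT_step; last by case/andP: kn.
rewrite mulrCA; apply: ler_wpM2l; first exact: Dd_ge0.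
have ck := @ck_gt0 k pp (proj1 (andP kn)).
rewrite -ler_pdivlMr //.
exact: le_trans rob (@robust_le q k kn).
Qed.


Lemma adm_mono (U : nat -> R) i j : admissible_utility n U -> (1 <= i)%N -> (i <= j)%N -> (j <= n)%N ->
  U j <= U i.
Proof.
case=> _ [Hm _] i1; elim: j => [|j IH]; first by rewrite leqn0 => /eqP i0; rewrite i0 in i1.
rewrite leq_eqVlt => /orP[/eqP->//|]; rewrite ltnS => ij jn.
apply: le_trans (IH ij (ltnW jn)); apply: Hm.
by rewrite jn (leq_trans i1 ij).
Qed.

Lemma expOPT_gt0 (U : nat -> R) : 0 < p <= 1 -> admissible_utility n U -> nonzero_utility n U ->
  0 < expOPT n p U.
Proof.
move=> /andP[p0 p1] adm [i [/andP[i1 iN] Ui]].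
have n1 : (1 <= n)%N by apply: leq_trans i1 iN.
have U1 : 0 < U 1%N.
  have := @adm_mono U 1 i adm (leqnn 1) i1 iN.
  have : 0 <= U i by case: adm => H _; apply: H; rewrite i1 iN.
  by rewrite le_eqVlt eq_sym (negbTE (introN eqP Ui)) /= => H1 H2; apply: lt_le_trans H1 H2.
rewrite /expOPT big_ltn //=.
apply: ltr_pwDl; first by rewrite subnn expr0 mulr1 mulr_gt0.
rewrite big_seq; apply: sumr_ge0 => j; rewrite mem_index_iota => /andP[j1 jn].
apply: mulr_ge0; last by apply: exprn_ge0; lra.
apply: mulr_ge0; last lra.
by case: adm => H _; apply: H; rewrite ltnS in jn; rewrite jn andbT (leq_trans _ j1).
Qed.


Lemma step_adm k : admissible_utility n (step k).
Proof.
split; first by move=> i _; rewrite /step; case: ifP => _; lra.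
split; last by rewrite /step; case: ifP => _; lra.
move=> i _; rewrite /step; case: ifP => h1; case: ifP => h2 //; try lra.
by move: h2; rewrite (ltnW h1).
Qed.

Lemma step_nz k : (1 <= k)%N -> nonzero_utility n (step k) \/ (n = 0)%N.
Proof.
case: n => [|m] k1; [by right|left].
by exists 1%N; split => //; rewrite /step k1; apply/eqP; rewrite oner_eq0.
Qed.

Lemma worst_eq q : (1 <= n)%N -> 0 < p <= 1 ->
  exists2 k0, (1 <= k0 <= n)%N &
  worst_ratio n p q = robust_ratio n p q /\ robust_ratio n p q = ratio q k0.
Proof.
move=> n1 pp.
have [k0 k0n [E H]] := @fin_inf (ratio q) n n1.
have rr : robust_ratio n p q = ratio q k0 by rewrite /robust_ratio -/(ratio q) E.
exists k0 => //; split => //; rewrite rr.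
apply: inf_attained.
  exists (step k0); last by rewrite expOPT_step //; case/andP: k0n.
  split; first exact: step_adm.
  by case: (@step_nz k0 (proj1 (andP k0n))) => // n0; rewrite n0 in n1.
move=> _ [U [adm nz] <-].
have hU := @expOPT_gt0 U pp adm nz.
rewrite -rr ler_pdivlMr //.
by apply: part1 => //; rewrite /is_robust.
Qed.


Section Cont.
Variable T : topologicalType.

Lemma ct_cst (c : R) : continuous (fun _ : T => c).
Proof. by move=> x; apply: cvg_cst. Qed.

Lemma ct_add (f g : T -> R) : continuous f -> continuous g ->
  continuous (fun x => f x + g x).
Proof. by move=> cf cg x; apply: cvgD; [apply: cf|apply: cg]. Qed.

Lemma ct_mul (f g : T -> R) : continuous f -> continuous g ->
  continuous (fun x => f x * g x).
Proof. by move=> cf cg x; apply: cvgM; [apply: cf|apply: cg]. Qed.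

Lemma ct_opp (f : T -> R) : continuous f -> continuous (fun x => - f x).
Proof. by move=> cf x; apply: cvgN; apply: cf. Qed.

Lemma ct_min (f g : T -> R) : continuous f -> continuous g ->
  continuous (fun x => Order.min (f x) (g x)).
Proof. by move=> cf cg x; apply: continuous_min; [apply: cf|apply: cg]. Qed.

Lemma ct_sum (I : Type) (r : seq I) (P : pred I) (F : I -> T -> R) :
  (forall i, continuous (F i)) -> continuous (fun x => \sum_(i <- r | P i) F i x).
Proof.
move=> cF; elim: r => [|i r IH].
  under eq_fun => x do rewrite big_nil; exact: ct_cst.
under eq_fun => x do rewrite big_cons.
case: (P i); last exact: IH.
exact: ct_add.
Qed.

Lemma ct_prod (I : Type) (r : seq I) (P : pred I) (F : I -> T -> R) :
  (forall i, continuous (F i)) -> continuous (fun x => \prod_(i <- r | P i) F i x).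
Proof.
move=> cF; elim: r => [|i r IH].
  under eq_fun => x do rewrite big_nil; exact: ct_cst.
under eq_fun => x do rewrite big_cons.
case: (P i); last exact: IH.
exact: ct_mul.
Qed.

End Cont.


Fixpoint allseqs (m : nat) : seq (seq nat) :=
  if m is m'.+1 then [::] :: [seq x :: s | x <- iota 0 n.+1, s <- allseqs m']
  else [:: [::]].
Fixpoint allbseqs (m : nat) : seq (seq bool) :=
  if m is m'.+1 then [::] :: [seq x :: s | x <- [:: true; false], s <- allbseqs m']
  else [:: [::]].
Lemma allseqsS m : allseqs m.+1 = [::] :: [seq x :: s | x <- iota 0 n.+1, s <- allseqs m].
Proof. by []. Qed.
Lemma allbseqsS m : allbseqs m.+1 = [::] :: [seq x :: s | x <- [:: true; false], s <- allbseqs m].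
Proof. by []. Qed.
Definition Sdom : seq (seq nat * seq bool) :=
  [seq (r, d) | r <- allseqs n, d <- allbseqs n].

Lemma allseqsP m (r : seq nat) : (size r <= m)%N -> all (fun x => x <= n)%N r ->
  r \in allseqs m.
Proof.
elim: m r => [|m IH] [|x r] //; rewrite allseqsS in_cons.
rewrite ltnS => sr /andP[xn ar].
apply: (allpairs_f (fun x s => x :: s)); first by rewrite mem_iota add0n ltnS.
exact: IH.
Qed.

Lemma allbseqsP m (d : seq bool) : (size d <= m)%N -> d \in allbseqs m.
Proof.
elim: m d => [|m IH] [|x d] //; rewrite allbseqsS in_cons.
rewrite ltnS => sd; apply/orP; right.
apply: (allpairs_f (fun x s => x :: s)); first by case: x.
exact: IH.
Qed.

Lemma SdomP r d : (size r <= n)%N -> all (fun x => x <= n)%N r -> (size d <= n)%N ->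
  (r, d) \in Sdom.
Proof.
move=> sr ar sd; apply: (allpairs_f (fun r d => (r, d))).
  exact: allseqsP. exact: allbseqsP.
Qed.

Lemma pranks_ok rs u d : (u < n)%N -> (size d <= n)%N -> (pranks rs u, d) \in Sdom.
Proof.
move=> un dn; apply: SdomP => //.
  by rewrite /pranks size_map size_iota.
apply/allP => x /mapP[v]; rewrite mem_iota add0n ltnS => vu ->.
rewrite /prank; apply: leq_trans (count_size _ _) _.
case/andP: vu => _ vu.
rewrite size_take; case: ifP => h.
  by apply: leq_ltn_trans vu un.
move/negbT: h; rewrite -leqNgt => h; apply: leq_trans h _.
exact: leq_ltn_trans vu un.
Qed.

Definition agree (q1 q2 : policy R) := forall r d, (r, d) \in Sdom -> q1 r d = q2 r d.

Lemma collect_ext q1 q2 rs t : agree q1 q2 -> (t < n)%N ->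
  collect_at q1 p rs t = collect_at q2 p rs t.
Proof.
move=> ag tn; rewrite /collect_at; apply: eq_bigr => d _.
rewrite ag; last by apply: pranks_ok => //; rewrite size_tuple ltnW.
congr (_ * _ * _); rewrite /reach; apply: eq_bigr => u _.
rewrite ag //; apply: pranks_ok.
  by apply: ltn_trans tn; rewrite -{2}(size_tuple d).
have ut : (u < t)%N by rewrite -{2}(size_tuple d).
rewrite size_take; case: ifP => h; first exact: ltnW (ltn_trans ut tn).
by rewrite size_tuple; apply: ltnW.
Qed.

Lemma expU_ext q1 q2 U : agree q1 q2 -> expU n p q1 U = expU n p q2 U.
Proof.
move=> ag; rewrite /expU; congr (_ * _); apply: eq_bigr => s _; apply: eq_bigr => t _.
by rewrite (@collect_ext q1 q2 _ t ag).
Qed.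


Definition NN := size Sdom.

Definition param (x : 'rV[R]_NN) : policy R := fun r d =>
  match (insub (index (r, d) Sdom) : option 'I_NN) with Some i => x ord0 i | None => 0 end.

Definition xof (q : policy R) : 'rV[R]_NN :=
  \row_(i < NN) q (nth ([::], [::]) Sdom i).1 (nth ([::], [::]) Sdom i).2.

Lemma param_xof q : agree (param (xof q)) q.
Proof.
move=> r d rd; rewrite /param insubT; first by rewrite index_mem.
by move=> h /=; rewrite mxE /= nth_index.
Qed.

Lemma param_pol (x : 'rV[R]_NN) : (forall i, 0 <= x ord0 i <= 1) -> is_policy (param x).
Proof.
move=> hx r d; rewrite /param; case: insub => [i|]; first exact: hx.
by rewrite lexx ler01.
Qed.

Lemma xof_box q : is_policy q -> forall i, 0 <= xof q ord0 i <= 1.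
Proof. by move=> hq i; rewrite mxE; apply: hq. Qed.

Lemma param_ct r d : continuous (fun x : 'rV[R]_NN => param x r d).
Proof.
rewrite /param; case: insub => [i|]; last exact: ct_cst.
exact: coord_continuous.
Qed.

Lemma reach_ct rs (d : seq bool) : continuous (fun x => reach (param x) p rs d).
Proof.
rewrite /reach; apply: ct_prod => u.
case: (nth false d u).
  by apply: ct_mul; [apply: param_ct|apply: ct_cst].
apply: ct_add; first exact: ct_cst.
by apply: ct_opp; apply: param_ct.
Qed.

Lemma collect_ct rs t : continuous (fun x => collect_at (param x) p rs t).
Proof.
rewrite /collect_at; apply: ct_sum => d.
apply: ct_mul; last exact: ct_cst.
apply: ct_mul; first exact: reach_ct.
exact: param_ct.
Qed.

Lemma expU_ct U : continuous (fun x => expU n p (param x) U).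
Proof.
rewrite /expU; apply: ct_mul; first exact: ct_cst.
apply: ct_sum => s; apply: ct_sum => t.
apply: ct_mul; first exact: ct_cst.
exact: collect_ct.
Qed.

Lemma ratio_ct k : continuous (fun x => ratio (param x) k).
Proof.
rewrite /ratio /Pcollect_le; apply: ct_mul; last exact: ct_cst.
exact: expU_ct.
Qed.


Fixpoint mn (g : nat -> R) (m : nat) : R :=
  if m is m'.+1 then Order.min (mn g m') (g m) else g 1%N.

Lemma mn_le g m k : (1 <= k <= m)%N -> mn g m <= g k.
Proof.
elim: m => [|m IH] /andP[k1 km]; first by case: k k1 km.
rewrite /= ge_min; move: km; rewrite leq_eqVlt => /orP[/eqP->|]; first by rewrite lexx orbT.
by rewrite ltnS => km; rewrite IH // k1.
Qed.

Lemma mn_in g m : exists2 k, (1 <= k <= maxn m 1)%N & mn g m = g k.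
Proof.
elim: m => [|m [k kr IH]]; first by exists 1%N.
rewrite /=; case: leP => _.
  exists k => //; case/andP: kr => k1 km; rewrite k1 /=.
  apply: leq_trans km _; rewrite geq_max; apply/andP; split.
    by rewrite leq_max ltnW.
  by rewrite leq_max orbT.
by exists m.+1; rewrite // leq_max leqnn.
Qed.

Lemma robust_mn q : (1 <= n)%N -> robust_ratio n p q = mn (ratio q) n.
Proof.
move=> n1; rewrite /robust_ratio -/(ratio q).
have [k kr E] := mn_in (ratio q) n.
rewrite (maxn_idPl n1) in kr.
apply: inf_attained; first by exists k.
by move=> _ [j jn <-]; apply: mn_le.
Qed.

Lemma mn_ct (G : nat -> 'rV[R]_NN -> R) m : (forall k, continuous (G k)) ->
  continuous (fun x => mn (G^~ x) m).
Proof.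
move=> cG; elim: m => [|m IH] /=; first exact: cG.
exact: ct_min.
Qed.

Lemma best_policy : (1 <= n)%N -> exists2 qs, is_policy qs &
  forall q, is_policy q -> robust_ratio n p q <= robust_ratio n p qs.
Proof.
move=> n1.
pose F x := mn (fun k => ratio (param x) k) n.
have cF : continuous F by apply: (@mn_ct (fun k x => ratio (param x) k)) => k; apply: ratio_ct.
have [c cin Hc] : exists2 c, c \in [set v : 'rV[R]_NN | forall i, `[0, 1]%classic (v ord0 i)]%classic &
   forall t, t \in [set v : 'rV[R]_NN | forall i, `[0, 1]%classic (v ord0 i)]%classic -> F t <= F c.
  apply: compact_EVT_max.
  - by exists 0 => i /=; rewrite mxE in_itv /= lexx ler01.
  - have := @rV_compact R NN (fun=> `[0, 1]%classic) (fun=> @segment_compact R 0 1). exact.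
  - exact: continuous_subspaceT.
have box : forall i, 0 <= c ord0 i <= 1.
  by move=> i; move: cin; rewrite inE => /(_ i); rewrite /= in_itv.
exists (param c); first exact: param_pol.
move=> q hq.
have -> : robust_ratio n p q = F (xof q).
  rewrite robust_mn // /F; congr mn; apply: funext => k.
  by rewrite /ratio /Pcollect_le (@expU_ext _ _ _ (param_xof q)).
rewrite robust_mn //; apply: Hc.
rewrite inE => i /=; rewrite in_itv /=; exact: xof_box.
Qed.

End Aux.

Theorem proposition1 (R : realType) (n : nat) (p : R) :
  (1 <= n)%N -> 0 < p <= 1 ->
  (forall (q : policy R) (g : R), is_policy q -> is_robust n p g q ->
     forall U : nat -> R, admissible_utility n U ->
       g * expOPT n p U <= expU n p q U) /\
  ((exists q : policy R, is_policy q /\ worst_ratio n p q = gamma_star n p) /\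
   (forall q : policy R, is_policy q -> worst_ratio n p q <= gamma_star n p) /\
   (forall q : policy R, is_policy q ->
      exists U : nat -> R, [/\ admissible_utility n U, nonzero_utility n U &
        expU n p q U / expOPT n p U = worst_ratio n p q])).
Proof.
move=> n1 pp; split.
  by move=> q g _ rob U adm; apply: part1.
have [qs hqs best] := @best_policy R n p n1.
have gs : gamma_star n p = robust_ratio n p qs.
  apply: sup_attained; first by exists qs.
  by move=> _ [q hq <-]; apply: best.
split.
  exists qs; split => //; rewrite gs.
  by have [k0 _ [-> _]] := @worst_eq R n p qs n1 pp.
split.
  move=> q hq; rewrite gs.
  have [k0 _ [-> _]] := @worst_eq R n p q n1 pp.
  exact: best.
move=> q hq.
have [k0 k0n [E1 E2]] := @worst_eq R n p q n1 pp.
exists (step R k0); split.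
- exact: step_adm.
- by case: (@step_nz R n k0 (proj1 (andP k0n))) => // n0; rewrite n0 in n1.
- rewrite E1 E2 /ratio expOPT_step //; by case/andP: k0n.
Qed.
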